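(* Let $(\mathfrak{n},J,\langle\cdot,\cdot\rangle)$ be a Hermitian Lie algebra with $\mathfrak{n}$ $2$-step nilpotent. Then $\langle\cdot,\cdot\rangle$ is pluriclosed if and only if $J$ is $2$-step and $$\langle[Jy,Jz],[w,u]\rangle-\langle[Ju,Jz],[w,y]\rangle+\langle[Ju,Jy],[w,z]\rangle+\langle[Jw,Jz],[u,y]\rangle-\langle[Jw,Jy],[u,z]\rangle+\langle[Jw,Ju],[y,z]\rangle=0$$ for all $w,u,y,z\in\mathfrak{n}$. In particular, if $J$ is abelian, let $\mathfrak{z}$ be the center, $\mathfrak{v}=\mathfrak{z}^\perp$ and $j:\mathfrak{z}\to\operatorname{End}(\mathfrak{v})$ defined by $\langle j(x)v,w\rangle=\langle x,[v,w]\rangle$ for $x\in\mathfrak{z}$, $v,w\in\mathfrak{v}$; then $\langle\cdot,\cdot\rangle$ is pluriclosed if and only if $j([u,y])z+j([y,z])u+j([z,u])y=0$ for all $u,y,z\in\mathfrak{v}$.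
   Context: A complex structure on a real Lie algebra $\mathfrak{g}$ is a linear map $J$ with $J^2=-I$ and $N_J(x,y)=[x,y]+J([Jx,y]+[x,Jy])-[Jx,Jy]=0$; it is abelian if $[Jx,Jy]=[x,y]$ for all $x,y$. Define $\mathfrak{a}_0(J)=0$, $\mathfrak{a}_\ell(J)=\{x: [x,\mathfrak{g}]\subset\mathfrak{a}_{\ell-1}(J),\ [Jx,\mathfrak{g}]\subset\mathfrak{a}_{\ell-1}(J)\}$; $J$ is $t$-step if $t$ is the least integer with $\mathfrak{a}_t(J)=\mathfrak{g}$. A Hermitian Lie algebra is $(\mathfrak{g},J,\langle\cdot,\cdot\rangle)$ with $\langle Jx,Jy\rangle=\langle x,y\rangle$. Torsion 3-form: $c(x,y,z)=-\langle[Jx,Jy],z\rangle-\langle[Jy,Jz],x\rangle-\langle[Jz,Jx],y\rangle$; $\langle\cdot,\cdot\rangle$ is pluriclosed if $dc=0$ for the Chevalley–Eilenberg differential $d$. $\mathfrak{n}$ is $2$-step nilpotent if non-abelian with $[\mathfrak{n},\mathfrak{n}]$ central. *)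

(* Defs.v *)
From HB Require Import structures.
From mathcomp Require Import all_boot all_order all_algebra.
From mathcomp Require Import reals.
Set Implicit Arguments. Unset Strict Implicit. Unset Printing Implicit Defensive.
Import Order.TTheory GRing.Theory Num.Theory.
Local Open Scope ring_scope.

Section Defs.
Variables (R : realType) (V : vectType R).

Definition lie_algebra (br : V -> V -> V) : Prop :=
  [/\ (forall (a : R) x y z, br (a *: x + y) z = a *: br x z + br y z),
      (forall (a : R) x y z, br z (a *: x + y) = a *: br z x + br z y),
      (forall x, br x x = 0) &
      (forall x y z, br x (br y z) + br y (br z x) + br z (br x y) = 0)].

Definition complex_structure (br : V -> V -> V) (J : V -> V) : Prop :=
  [/\ (forall (a : R) x y, J (a *: x + y) = a *: J x + J y),
   (forall x, J (J x) = - x) &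
  (forall x y, br x y + J (br (J x) y + br x (J y)) - br (J x) (J y) = 0)].

Definition abelian_cs (br : V -> V -> V) (J : V -> V) : Prop :=
  forall x y, br (J x) (J y) = br x y.

Fixpoint a_seq (br : V -> V -> V) (J : V -> V) (l : nat) (x : V) : Prop :=
  match l with
  | 0 => x = 0
  | l'.+1 => forall y, a_seq br J l' (br x y) /\ a_seq br J l' (br (J x) y)
  end.

Definition is_t_step (br : V -> V -> V) (J : V -> V) (t : nat) : Prop :=
  (forall x, a_seq br J t x) /\ (forall s, (s < t)%N -> ~ (forall x, a_seq br J s x)).

Definition inner_product (ip : V -> V -> R) : Prop :=
  [/\ (forall x y, ip x y = ip y x),
      (forall (a : R) x y z, ip (a *: x + y) z = a * ip x z + ip y z) &
      (forall x, x != 0 -> 0 < ip x x)].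

Definition hermitian_structure (J : V -> V) (ip : V -> V -> R) : Prop :=
  inner_product ip /\ (forall x y, ip (J x) (J y) = ip x y).

Definition two_step_nilpotent (br : V -> V -> V) : Prop :=
  (exists x y, br x y != 0) /\ (forall x y z, br (br x y) z = 0).

Definition torsion (br : V -> V -> V) (J : V -> V) (ip : V -> V -> R)
  (x y z : V) : R :=
  - ip (br (J x) (J y)) z - ip (br (J y) (J z)) x - ip (br (J z) (J x)) y.

(* Chevalley–Eilenberg differential of a 3-form c:
   dc(x0,x1,x2,x3) = sum_{i<j} (-1)^(i+j) c([xi,xj], x0,..,^xi,..,^xj,..,x3). *)
Definition CE_d3 (br : V -> V -> V) (c : V -> V -> V -> R) (x0 x1 x2 x3 : V) : R :=
    c (br x0 x1) x2 x3 - c (br x0 x2) x1 x3 + c (br x0 x3) x1 x2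
  + c (br x1 x2) x0 x3 - c (br x1 x3) x0 x2 + c (br x2 x3) x0 x1.

Definition pluriclosed (br : V -> V -> V) (J : V -> V) (ip : V -> V -> R) : Prop :=
  forall x0 x1 x2 x3, CE_d3 br (torsion br J ip) x0 x1 x2 x3 = 0.

Definition in_center (br : V -> V -> V) (x : V) : Prop := forall y, br x y = 0.
Definition in_v (br : V -> V -> V) (ip : V -> V -> R) (v : V) : Prop :=
  forall x, in_center br x -> ip x v = 0.

Definition j_map_spec (br : V -> V -> V) (ip : V -> V -> R) (jm : V -> V -> V) : Prop :=
  forall x v, in_center br x -> in_v br ip v ->
    in_v br ip (jm x v) /\
    (forall w, in_v br ip w -> ip (jm x v) w = ip x (br v w)).

End Defs.

(* Main.v *)
Require Import Defs.
From HB Require Import structures.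
From mathcomp Require Import all_boot all_order all_algebra.
From mathcomp Require Import reals.
From mathcomp Require Import ring lra zify.
From Stdlib Require Import Classical.
Import Order.TTheory GRing.Theory Num.Theory.
Local Open Scope ring_scope.

Section Aux.
Variables (R : realType) (V : vectType R) (br : V -> V -> V) (J : V -> V) (ip : V -> V -> R).
Hypothesis HL : lie_algebra br.
Hypothesis HC : complex_structure br J.
Hypothesis HH : hermitian_structure J ip.
Hypothesis HN : two_step_nilpotent br.

Lemma brDl x y z : br (x + y) z = br x z + br y z.
Proof. by case: HL => H1 _ _ _; rewrite -{1}[x]scale1r H1 scale1r. Qed.
Lemma brDr x y z : br z (x + y) = br z x + br z y.
Proof. by case: HL => _ H1 _ _; rewrite -{1}[x]scale1r H1 scale1r. Qed.
Lemma br0l z : br 0 z = 0.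
Proof. have h := brDl 0 0 z; rewrite addr0 in h. by apply: (addrI (br 0 z)); rewrite addr0 -h. Qed.
Lemma br0r z : br z 0 = 0.
Proof. have h := brDr 0 0 z; rewrite addr0 in h. by apply: (addrI (br z 0)); rewrite addr0 -h. Qed.
Lemma brNl x z : br (- x) z = - br x z.
Proof. by apply/eqP; rewrite -subr_eq0 opprK -brDl addNr br0l. Qed.
Lemma brNr x z : br z (- x) = - br z x.
Proof. by apply/eqP; rewrite -subr_eq0 opprK -brDr addNr br0r. Qed.
Lemma brZl a x z : br (a *: x) z = a *: br x z.
Proof. by case: HL => H1 _ _ _; rewrite -[a *: x]addr0 H1 br0l addr0. Qed.
Lemma brA x y : br y x = - br x y.
Proof.
case: HL => _ _ H3 _; have h := H3 (x + y).
rewrite brDl !brDr !H3 add0r addr0 in h.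
by apply/eqP; rewrite -subr_eq0 opprK addrC h.
Qed.
Lemma brc_r e x : in_center br e -> br x e = 0.
Proof. by move=> he; rewrite brA he oppr0. Qed.
Lemma bb_l x y z : br (br x y) z = 0.
Proof. by case: HN. Qed.
Lemma bb_r x y z : br z (br x y) = 0.
Proof. by rewrite brA bb_l oppr0. Qed.
Lemma bb_c x y : in_center br (br x y).
Proof. by move=> z; exact: bb_l. Qed.

Lemma JD x y : J (x + y) = J x + J y.
Proof. by case: HC => H1 _ _; rewrite -{1}[x]scale1r H1 scale1r. Qed.
Lemma J0 : J 0 = 0.
Proof. have h := JD 0 0; rewrite addr0 in h. by apply: (addrI (J 0)); rewrite addr0 -h. Qed.
Lemma JN x : J (- x) = - J x.
Proof. by apply/eqP; rewrite -subr_eq0 opprK -JD addNr J0. Qed.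
Lemma JJ x : J (J x) = - x.
Proof. by case: HC. Qed.

Lemma ipS x y : ip x y = ip y x.
Proof. by case: HH => -[]. Qed.
Lemma ipDl x y z : ip (x + y) z = ip x z + ip y z.
Proof. by case: HH => -[_ H _] _; rewrite -{1}[x]scale1r H mul1r. Qed.
Lemma ip0l z : ip 0 z = 0.
Proof. have h := ipDl 0 0 z; rewrite addr0 in h. by apply: (addrI (ip 0 z)); rewrite addr0 -h. Qed.
Lemma ipNl x z : ip (- x) z = - ip x z.
Proof. by apply/eqP; rewrite -subr_eq0 opprK -ipDl addNr ip0l. Qed.
Lemma ipDr x y z : ip z (x + y) = ip z x + ip z y.
Proof. by rewrite ipS ipDl !(ipS z). Qed.
Lemma ip0r z : ip z 0 = 0.
Proof. by rewrite ipS ip0l. Qed.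
Lemma ipNr x z : ip z (- x) = - ip z x.
Proof. by rewrite ipS ipNl ipS. Qed.
Lemma ipJ x y : ip (J x) (J y) = ip x y.
Proof. by case: HH. Qed.
Lemma ip_eq0 x : ip x x = 0 -> x = 0.
Proof.
case: HH => -[_ _ H] _ h; apply/eqP; apply/negP => /negP /H.
by rewrite h ltxx.
Qed.

Lemma NJc e x : in_center br e -> br (J e) (J x) = J (br (J e) x).
Proof.
case: HC => _ _ H3 he; have h := H3 e x.
rewrite he (he (J x)) add0r addr0 in h.
by apply/eqP; rewrite eq_sym -subr_eq0 h.
Qed.

Lemma P_lemma a b y : in_center br a -> in_center br b -> pluriclosed br J ip ->
  2 * ip (br (J a) y) (br (J b) y) = ip (br (J (br (J a) y)) y) b.
Proof.
move=> ha hb Hp; have h := Hp (J a) y b (J y).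
rewrite /CE_d3 /torsion in h.
rewrite ?(brc_r _ _ hb) ?(NJc _ _ hb) ?(NJc _ _ (bb_c _ _)) ?JJ ?J0 ?br0l ?br0r in h.
rewrite ?brNl ?brNr ?bb_l ?bb_r ?(brc_r _ _ hb) ?(brc_r _ _ ha) ?hb ?J0 ?oppr0 in h.
rewrite ?(NJc _ _ ha) ?JJ ?brNl ?bb_l ?ha ?(brA (J (br _ _)) y) ?(brA (J b) (J y)) in h.
rewrite ?(NJc _ _ hb) ?br0r ?oppr0 ?opprK in h.
rewrite ?ipNl ?ipNr ?ip0l ?ip0r ?ipJ ?opprK in h.
rewrite (ipS (br (J b) y)) ?J0 ?ip0l in h.
lra.
Qed.

Lemma pc_center e y : pluriclosed br J ip -> in_center br e -> br (J e) y = 0.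
Proof.
move=> Hp he.
set f1 := br (J e) y; set f2 := br (J f1) y; set f3 := br (J f2) y.
have c1 : in_center br f1 by exact: bb_c.
have c2 : in_center br f2 by exact: bb_c.
have h1 := P_lemma _ _ y c1 c1 Hp; have h2 := P_lemma _ _ y he c2 Hp.
rewrite -/f2 -/f3 in h1 h2.
rewrite (ipS f3) in h1.
have z2 : ip f2 f2 = 0 by lra.
have e2 := ip_eq0 _ z2.
have h3 := P_lemma _ _ y he he Hp; rewrite -/f1 -/f2 e2 ip0l in h3.
apply: ip_eq0; lra.
Qed.

Lemma torsion_c e a b : (forall y, br (J e) y = 0) ->
  torsion br J ip e a b = - ip (br (J a) (J b)) e.
Proof.
move=> he; rewrite /torsion he (brA (J e)) he oppr0 !ip0l; lra.
Qed.

Lemma dc_eq : (forall x y z, br (J (br x y)) z = 0) -> forall w u y z,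
  CE_d3 br (torsion br J ip) w u y z =
  - (ip (br (J y) (J z)) (br w u) - ip (br (J u) (J z)) (br w y)
      + ip (br (J u) (J y)) (br w z) + ip (br (J w) (J z)) (br u y)
      - ip (br (J w) (J y)) (br u z) + ip (br (J w) (J u)) (br y z)).
Proof.
move=> Hc w u y z; rewrite /CE_d3 !torsion_c //; lra.
Qed.


Lemma ipZl a x z : ip (a *: x) z = a * ip x z.
Proof. by case: HH => -[_ H _] _; rewrite -[a *: x]addr0 H ip0l addr0. Qed.
Lemma ipZr a x z : ip z (a *: x) = a * ip z x.
Proof. by rewrite ipS ipZl ipS. Qed.

Lemma span_ind (P : V -> Prop) : P 0 -> (forall x y, P x -> P y -> P (x + y)) ->
  (forall a x, P x -> P (a *: x)) ->
  forall s, (forall i, i \in s -> P i) -> forall w, w \in <<s>>%VS -> P w.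
Proof.
move=> P0 PD PZ; elim=> [|a s IH] Hs w.
  by rewrite span_nil memv0 => /eqP ->.
rewrite span_cons => /memv_addP [u /vlineP [k ->] [v Hv ->]].
apply: PD; first by apply: PZ; apply: Hs; rewrite mem_head.
by apply: IH Hv => i Hi; apply: Hs; rewrite in_cons Hi orbT.
Qed.

Lemma orth y s : (forall i, i \in s -> ip y i = 0) -> forall w, w \in <<s>>%VS -> ip y w = 0.
Proof.
apply: span_ind; first by rewrite ip0r.
  by move=> a b ha hb; rewrite ipDr ha hb addr0.
by move=> a b hb; rewrite ipZr hb mulr0.
Qed.

Lemma gs s x : exists c, c \in <<s>>%VS /\ forall i, i \in s -> ip (x - c) i = 0.
Proof.
elim: s x => [|a s IH] x.
  by exists 0; split; [rewrite mem0v|].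
have [c1 [m1 o1]] := IH x; have [c2 [m2 o2]] := IH a.
have O1 := orth _ _ o1; have O2 := orth _ _ o2.
have sub : (<<s>> <= <<a :: s>>)%VS by rewrite span_cons addvSr.
have ma : a \in <<a :: s>>%VS by apply: memv_span; rewrite mem_head.
case: (boolP (ip (a - c2) (a - c2) == 0)) => [/eqP/ip_eq0 /eqP | nz].
  rewrite subr_eq0 => /eqP ea.
  exists c1; split; first exact: (subvP sub).
  move=> i; rewrite in_cons => /orP [/eqP -> | /o1 //].
  by rewrite ea; apply: O1.
set a' := a - c2.
set t := ip (x - c1) a' / ip a' a'.
exists (c1 + t *: a'); split.
  apply: memvD; first exact: (subvP sub _ m1).
  by apply: memvZ; apply: memvB; [exact: ma | exact: (subvP sub _ m2)].
have E : forall i, ip (x - (c1 + t *: a')) i = ip (x - c1) i - t * ip a' i.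
  by move=> i; rewrite opprD addrA ipDl ipNl ipZl.
move=> i; rewrite in_cons => /orP [/eqP -> | hi]; last by rewrite E o1 // o2 // mulr0 subr0.
have -> : a = a' + c2 by rewrite /a' subrK.
rewrite ipDr !E (O1 _ m2).
have -> : ip a' c2 = 0 by exact: O2.
rewrite mulr0 !subr0 addr0 /t.
by rewrite mulfVK ?subrr.
Qed.


Lemma cstep s : ~ (forall w, in_center br w -> w \in <<s>>%VS) ->
  exists w, in_center br w /\ (\dim <<s>> < \dim <<w :: s>>)%N /\
     (\dim <<w :: s>> <= \dim (fullv : {vspace V}))%N.
Proof.
move=> H; have [w Hw] := not_all_ex_not _ _ H.
have [cw nw] := imply_to_and _ _ Hw.
exists w; split; first exact: cw.
split; last first.
  by apply: dimvS; apply: subvf.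
have sub : (<<s>> <= <<w :: s>>)%VS by rewrite span_cons addvSr.
rewrite (ltn_leqif (dimv_leqif_sup sub)).
apply/negP => /subvP /(_ w (memv_span (mem_head _ _))) hw.
by apply: nw.
Qed.

Lemma cspan n : forall s, (forall i, i \in s -> in_center br i) ->
  (\dim (fullv : {vspace V}) - \dim <<s>> <= n)%N ->
  exists s', (forall i, i \in s' -> in_center br i) /\
             forall w, in_center br w -> w \in <<s'>>%VS.
Proof.
elim: n => [|n IH] s Hs Hd;
  (case: (classic (forall w, in_center br w -> w \in <<s>>%VS)) => [H|H]; [by exists s|]);
  have [w [cw [lt le]]] := cstep _ H.
- lia.
- apply: (IH (w :: s)); last by lia.
  by move=> i; rewrite in_cons => /orP [/eqP -> // | /Hs].
Qed.

Lemma center_span s : (forall i, i \in s -> in_center br i) ->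
  forall w, w \in <<s>>%VS -> in_center br w.
Proof.
apply: span_ind.
- by move=> y; rewrite br0l.
- by move=> a b ha hb y; rewrite brDl ha hb addr0.
- by move=> a b hb y; rewrite brZl hb scaler0.
Qed.

Lemma decomp x : exists c, in_center br c /\ in_v br ip (x - c).
Proof.
have [s [Hs Hw]] := cspan (\dim (fullv : {vspace V})) [::] (fun i (hi : i \in [::]) => False_ind _ (notF hi)) (leq_subr _ _).
have [c [mc oc]] := gs s x.
exists c; split; first exact: (center_span _ Hs).
move=> w hw; rewrite ipS; exact: (orth _ _ oc _ (Hw _ hw)).
Qed.


Definition Idt w u y z :=
  ip (br (J y) (J z)) (br w u) - ip (br (J u) (J z)) (br w y)
      + ip (br (J u) (J y)) (br w z) + ip (br (J w) (J z)) (br u y)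
      - ip (br (J w) (J y)) (br u z) + ip (br (J w) (J u)) (br y z).

Definition Kf w u y z :=
  ip (br y z) (br w u) - ip (br u z) (br w y) + ip (br u y) (br w z)
  + ip (br w z) (br u y) - ip (br w y) (br u z) + ip (br w u) (br y z).

Lemma brred a b ca cb : in_center br ca -> in_center br cb ->
  br (a - ca) (b - cb) = br a b.
Proof.
move=> ha hb; rewrite brDl !brDr !brNl !brNr !ha (brc_r _ _ hb) !oppr0.
by rewrite !addr0.
Qed.

Lemma abel_c : abelian_cs br J -> forall x y z, br (J (br x y)) z = 0.
Proof. by move=> Hab x y z; rewrite -(Hab (J (br x y)) z) JJ brNl bb_l oppr0. Qed.

Lemma part1 : pluriclosed br J ip <->
     (is_t_step br J 2 /\
      forall w u y z : V,
        ip (br (J y) (J z)) (br w u) - ip (br (J u) (J z)) (br w y)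
      + ip (br (J u) (J y)) (br w z) + ip (br (J w) (J z)) (br u y)
      - ip (br (J w) (J y)) (br u z) + ip (br (J w) (J u)) (br y z) = 0).
Proof.
split.
  move=> Hp.
  have Hc : forall x y z, br (J (br x y)) z = 0.
    by move=> x y z; apply: pc_center => //; exact: bb_c.
  split.
    split.
      move=> x y /=; split=> y'; split; [exact: bb_l | exact: Hc | exact: bb_l | exact: Hc].
    case: HN => [[x0 [y0 nz]] _].
    case=> [|[|s]] // _ H.
      by move: nz; rewrite (H (br x0 y0)) eqxx.
    by move: nz; rewrite ((H x0 y0).1) eqxx.
  move=> w u y z; have := dc_eq Hc w u y z; rewrite Hp; lra.
move=> [[H2 _] Hid] w u y z.
have Hc : forall x y z, br (J (br x y)) z = 0 by move=> x y' z'; exact: ((H2 x y').1 z').2.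
by rewrite dc_eq // Hid oppr0.
Qed.

Lemma Idt_K : abelian_cs br J -> forall w u y z, Idt w u y z = Kf w u y z.
Proof. by move=> Hab w u y z; rewrite /Idt /Kf !Hab. Qed.

Lemma Kred w u y z cw cu cy cz : in_center br cw -> in_center br cu ->
  in_center br cy -> in_center br cz ->
  Kf (w - cw) (u - cu) (y - cy) (z - cz) = Kf w u y z.
Proof.
move=> hw hu hy hz; rewrite /Kf.
rewrite (brred _ _ _ _ hy hz) (brred _ _ _ _ hw hu) (brred _ _ _ _ hu hz).
rewrite (brred _ _ _ _ hw hy) (brred _ _ _ _ hu hy) (brred _ _ _ _ hw hz).
by [].
Qed.

Lemma Tip jm u y z w : j_map_spec br ip jm -> in_v br ip u -> in_v br ip y ->
  in_v br ip z -> in_v br ip w ->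
  ip (jm (br u y) z + jm (br y z) u + jm (br z u) y) w =
  ip (br u y) (br z w) + ip (br y z) (br u w) + ip (br z u) (br y w).
Proof.
move=> Hj hu hy hz hw.
by rewrite !ipDl (Hj _ _ (bb_c _ _) hz).2 // (Hj _ _ (bb_c _ _) hu).2 // (Hj _ _ (bb_c _ _) hy).2.
Qed.

Lemma Tv jm u y z : j_map_spec br ip jm -> in_v br ip u -> in_v br ip y ->
  in_v br ip z -> in_v br ip (jm (br u y) z + jm (br y z) u + jm (br z u) y).
Proof.
move=> Hj hu hy hz x hx.
by rewrite !ipDr (Hj _ _ (bb_c _ _) hz).1 // (Hj _ _ (bb_c _ _) hu).1 // (Hj _ _ (bb_c _ _) hy).1 // !addr0.
Qed.

Lemma Kv jm u y z w : j_map_spec br ip jm -> in_v br ip u -> in_v br ip y ->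
  in_v br ip z -> in_v br ip w ->
  Kf w u y z = - 2 * ip (jm (br u y) z + jm (br y z) u + jm (br z u) y) w.
Proof.
move=> Hj hu hy hz hw; rewrite Tip // /Kf.
rewrite (brA w z) (brA w u) (brA w y) (brA u z) !ipNl !ipNr.
rewrite (ipS (br w z)) (ipS (br w y)) (ipS (br w u)).
lra.
Qed.

Lemma part2 : abelian_cs br J ->
   forall jm : V -> V -> V, j_map_spec br ip jm ->
   (pluriclosed br J ip <->
      forall u y z : V, in_v br ip u -> in_v br ip y -> in_v br ip z ->
        jm (br u y) z + jm (br y z) u + jm (br z u) y = 0).
Proof.
move=> Hab jm Hj; have Hc := abel_c Hab.
split.
  move=> Hp u y z hu hy hz.
  have Hid := (part1.1 Hp).2.
  set T := _ + _ + _.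
  have vT : in_v br ip T by exact: Tv.
  have := Hid T u y z; rewrite -/(Idt T u y z) Idt_K // (Kv jm) // => h.
  apply: ip_eq0; lra.
move=> HT w u y z.
rewrite dc_eq //.
rewrite -/(Idt w u y z) Idt_K //.
have [cw [hcw vw]] := decomp w; have [cu [hcu vu]] := decomp u.
have [cy [hcy vy]] := decomp y; have [cz [hcz vz]] := decomp z.
by rewrite -(Kred _ _ _ _ _ _ _ _ hcw hcu hcy hcz) (Kv jm) // HT // ip0l mulr0 oppr0.
Qed.

End Aux.

Theorem mainTheorem16 (R : realType) (V : vectType R) (br : V -> V -> V)
  (J : V -> V) (ip : V -> V -> R) :
  lie_algebra br -> complex_structure br J -> hermitian_structure J ip ->
  two_step_nilpotent br ->
  (pluriclosed br J ip <->
     (is_t_step br J 2 /\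
      forall w u y z : V,
        ip (br (J y) (J z)) (br w u) - ip (br (J u) (J z)) (br w y)
      + ip (br (J u) (J y)) (br w z) + ip (br (J w) (J z)) (br u y)
      - ip (br (J w) (J y)) (br u z) + ip (br (J w) (J u)) (br y z) = 0))
  /\
  (abelian_cs br J ->
   forall jm : V -> V -> V, j_map_spec br ip jm ->
   (pluriclosed br J ip <->
      forall u y z : V, in_v br ip u -> in_v br ip y -> in_v br ip z ->
        jm (br u y) z + jm (br y z) u + jm (br z u) y = 0)).
Proof.
move=> HL HC HH HN; split.
  exact: (part1 _ _ _ _ _ HL HC HH HN).
exact: (part2 _ _ _ _ _ HL HC HH HN).
Qed.
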